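(* For an algebraic range-query function $Q$, given an array of size $n$, Bin Buffering uses a buffer of $n/b$ tuples computed in time $O(n)$ and updated in time $O(b)$ to support queries in time $O(n/b+b)$. Choosing $b=\sqrt{n}$ minimizes the query complexity to $O(\sqrt{n})$. If $Q$ is linear then updates take constant time.
   Context: Arrays are indexed $a_0,\ldots,a_{n-1}$. A range-query function $Q:\mathcal{A}^{R}\to R$ (where $\mathcal{A}^R$ is the set of finite arrays with values in $R$) is distributive if there is $F$ with $Q(a_0,\ldots,a_k,a_{k+1},\ldots,a_{n-1})=F(Q(a_0,\ldots,a_k),Q(a_{k+1},\ldots,a_{n-1}))$ for all $0\le k<n-1$. A real-valued range-query function $Q$ is algebraic if it can be computed from an intermediate tuple-valued distributive range-query function $G:\mathcal{A}^{\mathbb{R}}\to\mathbb{R}^m$ ($m$ a small fixed integer) with combining function $F:\mathcal{A}^{\mathbb{R}^m}\to\mathbb{R}^m$, i.e. $G(a_0,\ldots,a_k,a_{k+1},\ldots,a_{n-1})=F(G(a_0,\ldots,a_k),G(a_{k+1},\ldots,a_{n-1}))$; the cost of $G$ and $F$ is assumed independent of the values and constant per combination. Bin Buffering: given an integer $b$ dividing $n$, precompute the $n/b$ components $B_0=G(a_0,\ldots,a_{b-1})$, $B_1=G(a_b,\ldots,a_{2b-1})$, $\ldots$, $B_{n/b-1}=G(a_{n-b},\ldots,a_{n-1})$, and answer queries via $G(a_k,\ldots,a_l)=F(G(a_k,\ldots,a_{b\lceil k/b\rceil-1}),B_{\lceil k/b\rceil},\ldots,B_{\lfloor l/b\rfloor-1},G(a_{b\lfloor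 l/b\rfloor},\ldots,a_l))$. An update changes one array entry $a_k$ by $\Delta=a'_k-a_k$. $Q$ (with intermediate $G$) is linear if $G(a_0+\alpha d_0,\ldots,a_{n-1}+\alpha d_{n-1})=G(a_0,\ldots,a_{n-1})+\alpha G(d_0,\ldots,d_{n-1})$ for all arrays $a,d$ and constants $\alpha$. *)

(* Defs.v *)
From HB Require Import structures.
From mathcomp Require Import all_boot all_order all_algebra.
From mathcomp Require Import reals.
Set Implicit Arguments. Unset Strict Implicit. Unset Printing Implicit Defensive.
Import Order.TTheory GRing.Theory Num.Theory.
Local Open Scope ring_scope.

(* Cost model: a "costed" value is a pair (value, number of elementary
   operations performed to obtain it).  Elementary operations, each of
   constant cost: evaluating G on a one-element array, one binary
   application of the combining function F, one vector addition, one scalar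
   subtraction, one application of the final map h (Q = h o G).  Index
   arithmetic and array/buffer accesses are free (RAM model). *)

Section BinBuffering.
Variables (R : realType) (m : nat).
Local Notation T := 'rV[R]_m.
Variable G : seq R -> T.
Variable F : T -> T -> T.

Definition distributive_rq : Prop :=
  forall s1 s2 : seq R, s1 != [::] -> s2 != [::] ->
    G (s1 ++ s2) = F (G s1) (G s2).

Definition linear_rq : Prop :=
  forall (a d : seq R) (alpha : R), size a = size d ->
    G [seq x.1 + alpha * x.2 | x <- zip a d] = G a + alpha *: G d.

Definition leaf (x : R) : T * nat := (G [:: x], 1%N).
Definition comb (u v : T * nat) : T * nat := (F u.1 v.1, (u.2 + v.2).+1).
Definition free (v : T) : T * nat := (v, 0%N).

Definition comb_all (s : seq (T * nat)) : T * nat :=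
  match s with [::] => (0, 0%N) | p :: ps => foldl comb p ps end.

Definition eval_list (s : seq R) : T * nat := comb_all (map leaf s).

Definition segment (a : seq R) (i len : nat) : seq R := take len (drop i a).
Definition eval_seg (a : seq R) (i len : nat) : T * nat :=
  eval_list (segment a i len).

Definition buffer (a : seq R) (b : nat) : seq (T * nat) :=
  [seq eval_seg a (j * b) b | j <- iota 0 (size a %/ b)].
Definition buffer_vals (a : seq R) (b : nat) : seq T := map fst (buffer a b).
Definition buffer_cost (a : seq R) (b : nat) : nat := sumn (map snd (buffer a b)).

(* Query G(a_k..a_l) via
   F(G(a_k..a_{b ceil(k/b) - 1}), B_{ceil(k/b)}, ..., B_{floor(l/b)-1},
     G(a_{b floor(l/b)}..a_l)),
   empty pieces omitted; if a_k..a_l lies strictly inside one bin (so that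
   ceil(k/b) > floor(l/b)), it is computed directly. *)
Definition query (a : seq R) (Bv : seq T) (b k l : nat) : T * nat :=
  let lo := ((k + b.-1) %/ b)%N in
  let hi := (l %/ b)%N in
  if (hi < lo)%N then eval_seg a k (l - k).+1
  else comb_all
    ((if (k < lo * b)%N then [:: eval_seg a k (lo * b - k)] else [::])
     ++ [seq free v | v <- take (hi - lo) (drop lo Bv)]
     ++ [:: eval_seg a (hi * b) (l - hi * b).+1]).

Definition query_Q (h : T -> R) (a : seq R) (Bv : seq T) (b k l : nat)
  : R * nat :=
  let r := query a Bv b k l in (h r.1, r.2.+1).

Definition update (a : seq R) (Bv : seq T) (b k : nat) (x : R) : seq T * nat :=
  let a' := set_nth 0 a k x in
  let j := (k %/ b)%N in
  let r := eval_seg a' (j * b) b in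
  (set_nth 0 Bv j r.1, r.2).

(* Update for linear G: B_j := B_j + G(0,..,0,Delta,0,..,0) where the
   array is the bin of length b with Delta = x - a_k at offset p = k mod b;
   by distributivity G(0^p,Delta,0^q) = F(G(0^p), F(G(Delta), G(0^q))) and
   G(0^r) = 0 by linearity (empty zero-blocks omitted). *)
Definition lin_update (a : seq R) (Bv : seq T) (b k : nat) (x : R)
  : seq T * nat :=
  let j := (k %/ b)%N in
  let p := (k %% b)%N in
  let q := (b - p).-1 in
  let e := leaf (x - nth 0 a k) in
  let e1 := if (0 < q)%N then comb e (free 0) else e in
  let e2 := if (0 < p)%N then comb (free 0) e1 else e1 in
  (set_nth 0 Bv j (nth 0 Bv j + e2.1), (e2.2 + 2)%N).

End BinBuffering.

(* Main.v *)
Require Import Defs.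
From HB Require Import structures.
From mathcomp Require Import all_boot all_order all_algebra.
From mathcomp Require Import reals.
From mathcomp Require Import zify.
Set Implicit Arguments. Unset Strict Implicit. Unset Printing Implicit Defensive.
Import Order.TTheory GRing.Theory Num.Theory.
Local Open Scope ring_scope.

Section Aux.
Variables (R : realType) (m : nat).
Local Notation T := 'rV[R]_m.
Variable G : seq R -> T.
Variable F : T -> T -> T.

Lemma foldl_comb_cost (p : T * nat) ps :
  (foldl (comb F) p ps).2 = (p.2 + sumn (map snd ps) + size ps)%N.
Proof. elim: ps p => [|q ps IH] p /=; first by rewrite !addn0. rewrite IH /=; lia. Qed.

Lemma foldl_comb_val (p : T * nat) ps :
  (foldl (comb F) p ps).1 = foldl F p.1 (map fst ps).
Proof. by elim: ps p => [|q ps IH] p //=; rewrite IH. Qed.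

Lemma comb_all_cost ps : ps != [::] ->
  (comb_all F ps).2 = (sumn (map snd ps) + (size ps).-1)%N.
Proof. case: ps => [|p ps] //= _; rewrite foldl_comb_cost; lia. Qed.

Lemma sumn_free (s : seq T) : sumn (map snd (map (@Defs.free R m) s)) = 0%N.
Proof. by elim: s. Qed.

Lemma eval_list_cost s : ((eval_list G F s).2 <= 2 * size s)%N.
Proof.
case: s => [|x s] //=; rewrite foldl_comb_cost /=.
have -> : sumn [seq i.2 | i <- [seq leaf G i | i <- s]] = size s by elim: s => //= ? ? ->.
rewrite size_map; lia.
Qed.

Hypothesis HD : distributive_rq G F.

Lemma foldl_G s0 ss : s0 != [::] -> all (fun s => s != [::]) ss ->
  foldl F (G s0) (map G ss) = G (s0 ++ flatten ss).
Proof.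
elim: ss s0 => [|s ss IH] s0 /= H0; first by rewrite cats0.
case/andP => Hs Hss. rewrite -HD // IH ?catA //.
by case: s0 H0.
Qed.

Lemma comb_all_val ps ss : ss != [::] -> map fst ps = map G ss ->
  all (fun s => s != [::]) ss -> (comb_all F ps).1 = G (flatten ss).
Proof.
case: ss => [|s ss] // _; case: ps => [|p ps] //= [Hp Hps] /andP[Hs Hss].
by rewrite foldl_comb_val Hp Hps foldl_G.
Qed.

Lemma eval_list_val s : s != [::] -> (eval_list G F s).1 = G s.
Proof.
move=> Hs; rewrite /eval_list (@comb_all_val _ (map (fun x => [:: x]) s)).
- congr G; by elim: s {Hs} => //= x s ->.
- by case: s Hs.
- by rewrite -!map_comp.
- by rewrite all_map; apply/allP.
Qed.
Lemma e1_val (q : nat) (d : R) : G (nseq q 0) = 0 ->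
  (if (0 < q)%N then comb F (leaf G d) (Defs.free 0) else leaf G d).1 = G (d :: nseq q 0).
Proof. case: q => [|q] //= H0; by rewrite -H0 -HD. Qed.

Lemma e2_val (p : nat) (e : T * nat) s : G (nseq p 0) = 0 -> e.1 = G s -> s != [::] ->
  (if (0 < p)%N then comb F (Defs.free 0) e else e).1 = G (nseq p 0 ++ s).
Proof. case: p => [|p] //= H0 He Hs; by rewrite -H0 He -HD. Qed.
End Aux.

Section Seg.
Variable R : realType.
Implicit Types a : seq R.

Lemma size_segment a i L : size (segment a i L) = minn L (size a - i).
Proof. rewrite /segment size_take size_drop /minn; case: ifP; lia. Qed.

Lemma nth_segment a i L t : (t < L)%N -> nth 0 (segment a i L) t = nth 0 a (i + t).
Proof. by move=> Ht; rewrite /segment nth_take // nth_drop. Qed.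

Lemma segment_cat a i j L1 L2 : j = (i + L1)%N ->
  segment a i L1 ++ segment a j L2 = segment a i (L1 + L2).
Proof. by move=> ->; rewrite /segment takeD drop_drop addnC. Qed.

Lemma segment0 a i : segment a i 0 = [::].
Proof. by rewrite /segment take0. Qed.

Lemma segment_nonempty a i L : (0 < L)%N -> (i < size a)%N -> segment a i L != [::].
Proof. by move=> H1 H2; rewrite -size_eq0 size_segment; lia. Qed.

Lemma flatten_bins a b i t :
  flatten [seq segment a (j * b) b | j <- iota i t] = segment a (i * b) (t * b).
Proof.
elim: t i => [|t IH] i /=; first by rewrite segment0.
rewrite IH segment_cat; last by rewrite mulSn addnC.
by rewrite mulSn.
Qed.

Lemma seg_set_nth a i L k x : (k < size a)%N -> (k < i \/ i + L <= k)%N ->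
  segment (set_nth 0 a k x) i L = segment a i L.
Proof.
move=> Hk Hout; apply: (@eq_from_nth _ 0).
  by rewrite !size_segment size_set_nth; congr minn; lia.
move=> t; rewrite size_segment => Ht.
rewrite !nth_segment; try lia.
rewrite nth_set_nth /=; case: eqP => //; lia.
Qed.
End Seg.
Unset Implicit Arguments.

Theorem lemma1 : exists c : nat,
  forall (R : realType) (m : nat) (G : seq R -> 'rV[R]_m)
         (F : 'rV[R]_m -> 'rV[R]_m -> 'rV[R]_m) (h : 'rV[R]_m -> R),
  distributive_rq G F ->
  forall (n b : nat) (a : seq R), size a = n -> (0 < b)%N -> (b %| n)%N ->
  let Bv := buffer_vals G F a b in
  [/\ (* the buffer consists of n/b tuples, the correct bin values *)
      [/\ size Bv = (n %/ b)%N,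
          (forall j, (j < n %/ b)%N ->
            nth 0 Bv j = G (segment a (j * b) b))
        & (* computed in time O(n) *)
          (buffer_cost G F a b <= c * n)%N],
      (* queries answered correctly in time O(n/b + b) *)
      (forall k l, (k <= l)%N -> (l < n)%N ->
         (query_Q G F h a Bv b k l).1 = h (G (segment a k (l - k).+1))
         /\ ((query_Q G F h a Bv b k l).2 <= c * (n %/ b + b))%N),
      (* updates maintain the buffer in time O(b) *)
      (forall k x, (k < n)%N ->
         (update G F a Bv b k x).1 = buffer_vals G F (set_nth 0 a k x) b
         /\ ((update G F a Bv b k x).2 <= c * b)%N),
      (* b = sqrt n minimizes n/b + b, and queries then take O(sqrt n) *)
      ((b * b)%N = n ->
         (forall b', (0 < b')%N -> (b' %| n)%N ->
            (n %/ b + b <= n %/ b' + b')%N)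
         /\ (forall k l, (k <= l)%N -> (l < n)%N ->
               ((query_Q G F h a Bv b k l).2 <= c * b)%N))
    & (* if Q is linear, updates take constant time *)
      (linear_rq G ->
       forall k x, (k < n)%N ->
         (lin_update G F a Bv b k x).1 = buffer_vals G F (set_nth 0 a k x) b
         /\ ((lin_update G F a Bv b k x).2 <= c)%N)].
Proof.
exists 8%N => R m G F h HD n b a Ha Hb Hbn Bv.
have Hn : n = (n %/ b * b)%N by rewrite divnK.
have HBv : Bv = [seq (eval_seg G F a (j*b) b).1 | j <- iota 0 (n %/ b)].
  by rewrite /Bv /buffer_vals /buffer -map_comp Ha.
have Hsz : size Bv = (n %/ b)%N by rewrite HBv size_map size_iota.
have Hbin : forall j, (j < n %/ b)%N -> (j * b + b <= n)%N.
  move=> j Hj; rewrite addnC -mulSn [X in (_ <= X)%N]Hn leq_mul2r Hj orbT //.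
have Hval : forall j, (j < n %/ b)%N -> nth 0 Bv j = G (segment a (j*b) b).
  move=> j Hj; rewrite HBv (nth_map 0%N) ?size_iota // nth_iota // add0n.
  rewrite /eval_seg eval_list_val //; apply: segment_nonempty => //.
  have := Hbin j Hj; lia.
have Hcost : forall i t, (sumn [seq (eval_seg G F a (j*b) b).2 | j <- iota i t] <= t * (2 * b))%N.
  move=> i t; elim: t i => [|t IH] i //=.
  have := IH i.+1; have := eval_list_cost G F (segment a (i * b) b).
  rewrite size_segment /eval_seg; lia.
have Hdivlt : forall k, (k < n)%N -> (k %/ b < n %/ b)%N.
  by move=> k Hk; rewrite ltn_divLR // -Hn.
have Hq : forall k l, (k <= l)%N -> (l < n)%N ->
   (query_Q G F h a Bv b k l).1 = h (G (segment a k (l - k).+1))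
   /\ ((query_Q G F h a Bv b k l).2 <= 4 * b + 2 * (n %/ b) + 2)%N.
  move=> k l Hkl Hl.
  rewrite /query_Q /query.
  set lo := ((k + b.-1) %/ b)%N.
  set hi := (l %/ b)%N.
  have Hlo1 : (k <= lo * b)%N.
    move: (divn_eq (k + b.-1) b) (ltn_pmod (k + b.-1) Hb); rewrite -/lo; lia.
  have Hlo2 : (lo * b <= k + b.-1)%N.
    move: (divn_eq (k + b.-1) b) (ltn_pmod (k + b.-1) Hb); rewrite -/lo; lia.
  have Hhi1 : (hi * b <= l)%N.
    move: (divn_eq l b) (ltn_pmod l Hb); rewrite -/hi; lia.
  have Hhi2 : (l < hi * b + b)%N.
    move: (divn_eq l b) (ltn_pmod l Hb); rewrite -/hi; lia.
  have Hhin : (hi < n %/ b)%N by apply: Hdivlt.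
  case: ltnP => Hlh /=.
  - have := leq_mul Hlh (leqnn b); rewrite mulSn => Hm.
    have Hne : segment a k (l - k).+1 != [::] by apply: segment_nonempty; lia.
    split; first by rewrite /eval_seg eval_list_val.
    have := eval_list_cost G F (segment a k (l-k).+1); rewrite size_segment /eval_seg; lia.
  have Hlohi : (lo * b <= hi * b)%N by rewrite leq_mul2r Hlh orbT.
  have Hmid : take (hi - lo) (drop lo Bv) = [seq G (segment a (j*b) b) | j <- iota lo (hi - lo)].
    apply: (@eq_from_nth _ 0) => [|i].
      by rewrite size_take size_drop Hsz size_map size_iota; case: ifP; lia.
    rewrite size_take size_drop Hsz => Hi.
    have Hi' : (i < hi - lo)%N by move: Hi; case: ifP; lia.
    rewrite nth_take // nth_drop Hval; last lia.
    by rewrite (nth_map 0%N) ?size_iota // nth_iota.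
  rewrite Hmid.
  set pre := (if (k < lo * b)%N then _ else _).
  set spre := (if (k < lo * b)%N then [:: segment a k (lo * b - k)] else [::]).
  have Hprev : map fst pre = map G spre.
    rewrite /pre /spre; case: ifP => H //=; rewrite /eval_seg eval_list_val //.
    apply: segment_nonempty; lia.
  have Hpren : all (fun s => s != [::]) spre.
    rewrite /spre; case: ifP => H //=; rewrite andbT; apply: segment_nonempty; lia.
  have Hpref : flatten spre = segment a k (lo * b - k).
    rewrite /spre; case: ifP => H /=; first by rewrite cats0.
    have -> : (lo * b - k = 0)%N by lia.
    by rewrite segment0.
  have Hprec : (sumn (map snd pre) + size pre <= 2 * b)%N.
    rewrite /pre; case: ifP => H //=.
    have := eval_list_cost G F (segment a k (lo * b - k)); rewrite size_segment /eval_seg; lia.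
  set ss := spre ++ [seq segment a (j*b) b | j <- iota lo (hi - lo)]
            ++ [:: segment a (hi * b) (l - hi * b).+1].
  have Hsne : segment a (hi * b) (l - hi * b).+1 != [::] by apply: segment_nonempty; lia.
  split.
  + rewrite (@comb_all_val _ _ G F HD _ ss).
    * congr h; congr G.
      rewrite /ss !flatten_cat Hpref flatten_bins /= cats0.
      rewrite (@segment_cat _ a (lo * b) (hi * b)); last by rewrite mulnBl; lia.
      rewrite segment_cat; last lia.
      congr segment; rewrite mulnBl; lia.
    * by rewrite /ss -size_eq0 !size_cat /= addn1 addnS.
    * rewrite /ss !map_cat Hprev; congr (_ ++ _); congr (_ ++ _).
        by rewrite -!map_comp.
      by rewrite /= /eval_seg eval_list_val.
    * rewrite /ss !all_cat Hpren all_map /= Hsne; apply/andP; split => //.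
      apply/allP => j; rewrite mem_iota => Hj /=; apply: segment_nonempty => //.
      have := Hbin j; lia.
  + rewrite comb_all_cost; last by rewrite -size_eq0 !size_cat /= addn1 addnS.
    rewrite !map_cat !sumn_cat !size_cat sumn_free !size_map size_iota /=.
    have := eval_list_cost G F (segment a (hi * b) (l - hi * b).+1).
    rewrite size_segment /eval_seg; lia.
have Hupd : forall k x, (k < n)%N ->
  set_nth 0 Bv (k %/ b) (eval_seg G F (set_nth 0 a k x) (k %/ b * b) b).1
  = buffer_vals G F (set_nth 0 a k x) b.
  move=> k x Hk.
  have Ha' : size (set_nth 0 a k x) = n by rewrite size_set_nth Ha; lia.
  have Hj := Hdivlt k Hk.
  rewrite /buffer_vals /buffer -map_comp Ha'.
  apply: (@eq_from_nth _ 0).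
    by rewrite size_set_nth Hsz size_map size_iota; lia.
  move=> i; rewrite size_set_nth Hsz => Hi.
  have Hi' : (i < n %/ b)%N by lia.
  rewrite nth_set_nth /= (nth_map 0%N) ?size_iota // nth_iota // add0n /=.
  case: eqP => [->|Hij] //.
  rewrite HBv (nth_map 0%N) ?size_iota // nth_iota // add0n /eval_seg seg_set_nth //; last first.
    case: (ltnP k (i*b)) => H1; [by left|right].
    rewrite leqNgt; apply/negP => H2; apply: Hij.
    apply/eqP; rewrite eqn_leq leq_divRL // -[X in _ && X]ltnS ltn_divLR // H1 /=; lia.
  by rewrite Ha.
split.
- split => //.
  rewrite /buffer_cost /buffer -map_comp Ha.
  have := Hcost 0%N (n %/ b)%N; rewrite mulnCA -Hn => H; apply: (leq_trans H); lia.
- move=> k l Hkl Hl; have [H1 H2] := Hq k l Hkl Hl; split => //; lia.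
- move=> k x Hk; split; first exact: Hupd.
  rewrite /update /=; have := eval_list_cost G F (segment (set_nth 0 a k x) (k %/ b * b) b).
  rewrite size_segment /eval_seg => H; apply: (leq_trans H); lia.
- move=> Hbb; split.
    move=> b' Hb' /dvdnP [q Hq'].
    have -> : (n %/ b = b)%N by rewrite -Hbb mulnK.
    have -> : (n %/ b' = q)%N by rewrite Hq' mulnK.
    move: Hbb; rewrite Hq' => H.
    case: (leqP (b+b) (q+b')) => // H1; exfalso.
    have H2 : ((q+b').+1*(q+b').+1 <= (b+b)*(b+b))%N by apply: leq_mul.
    case: (leqP q b') => H3.
    + move: (subnK H3) => E; move: H H2; rewrite -E; set d := (b' - q)%N; nia.
    + move: (ltnW H3) => /subnK E; move: H H2; rewrite -E; set d := (q - b')%N; nia.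
  move=> k l Hkl Hl; have [_ H2] := Hq k l Hkl Hl; move: H2; rewrite -Hbb mulnK //; lia.
- move=> HL k x Hk.
  have G0 : forall r, G (nseq r 0) = 0.
    move=> r; have := HL (nseq r 0) (nseq r 0) 1 erefl.
    have -> : [seq x0.1 + 1 * x0.2 | x0 <- zip (nseq r 0) (nseq r 0)] = nseq r (0:R).
      by elim: r => //= r ->; rewrite mul1r addr0.
    rewrite scale1r => /(congr1 (fun v => v - G (nseq r 0))); rewrite subrr addrK => <-.
    by [].
  have Hj := Hdivlt k Hk.
  have Hp := ltn_pmod k Hb.
  have Hk' := divn_eq k b.
  rewrite /lin_update /=.
  split; last by case: (0 < k %% b)%N; case: (0 < (b - k %% b).-1)%N.
  rewrite (e2_val HD (G0 _) (e1_val HD _ (G0 _))) //.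
  rewrite -(Hupd k x Hk); congr set_nth.
  set j := (k %/ b)%N in Hj Hk' *. set p := (k %% b)%N in Hp Hk' *.
  set q := (b - p).-1.
  set Dv := nseq p 0 ++ (x - a`_k) :: nseq q 0.
  have HSsz : size (segment a (j*b) b) = b by rewrite size_segment; have := Hbin j Hj; lia.
  have HDsz : size Dv = b by rewrite size_cat /= !size_nseq; lia.
  have Hne' : segment (set_nth 0 a k x) (j * b) b != [::].
    apply: segment_nonempty => //; rewrite size_set_nth; lia.
  rewrite Hval // /eval_seg eval_list_val // -[G Dv]scale1r -HL; last by rewrite HSsz HDsz.
  congr G.
  apply: (@eq_from_nth _ 0).
    by rewrite size_map size_zip HSsz HDsz size_segment size_set_nth; have := Hbin j Hj; lia.
  rewrite size_map size_zip HSsz HDsz minnn => i Hi.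
  rewrite (nth_map (0, 0)) ?size_zip ?HSsz ?HDsz ?minnn // nth_zip ?HSsz ?HDsz // /=.
  rewrite !nth_segment // nth_set_nth /= /Dv nth_cat size_nseq.
  case: (ltngtP i p) => Hip.
  - rewrite nth_nseq Hip; case: eqP => E; first lia.
    by rewrite mulr0 addr0.
  - have -> : (i - p = (i - p.+1).+1)%N by lia.
    rewrite /= nth_nseq if_same; case: eqP => E; first lia.
    by rewrite mulr0 addr0.
  - rewrite Hip subnn /=; case: eqP => E; last lia.
    by rewrite mul1r -E addrC subrK.
Qed.
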